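(* Let $(V_i,W_{i\oplus_5 1})$, $i\in\{1,\ldots,5\}$, be a consistently connected KCBS-system satisfying the KCBS exclusion, and let $p_i=\Pr[V_i=1]=\Pr[W_i=1]$. Then $$\mathsf{s}_{odd}\big(\langle V_iW_{i\oplus_5 1}\rangle:i\in\{1,\ldots,5\}\big)\le 3$$ holds if and only if $\sum_{i=1}^5 p_i\le 2$.
   Context: $\oplus_5$ denotes cyclic addition on $\{1,\ldots,5\}$ ($5\oplus_5 1=1$). A KCBS-system consists of five jointly distributed pairs $(V_i,W_{i\oplus_5 1})$, $i=1,\ldots,5$, of $\pm1$-valued random variables, variables in different pairs being stochastically unrelated. It is consistently connected if $V_i$ and $W_i$ have the same distribution for each $i$. It satisfies the KCBS exclusion if $\Pr[V_i=1,W_{i\oplus_5 1}=1]=0$ for each $i$. $\langle\cdot\rangle$ denotes expectation. For reals $a_1,\ldots,a_m$, $\mathsf{s}_{odd}(a_1,\ldots,a_m)$ is the maximum of $\sum_{i=1}^m(\pm a_i)$ over all sign choices with an odd number of minus signs. *)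

(* Defs.v *)
From mathcomp Require Import all_boot all_order all_algebra.
From mathcomp Require Import reals.
Set Implicit Arguments. Unset Strict Implicit. Unset Printing Implicit Defensive.
Import Order.TTheory GRing.Theory Num.Theory.
Local Open Scope ring_scope.

(* Conventions: a +-1-valued random variable's value is encoded by a boolean,
   [true] <-> +1, [false] <-> -1.  [pm b] is the numeric value. *)
Definition pm {R : ringType} (b : bool) : R := if b then 1 else -1.

(* A joint distribution of a pair (V, W) of +-1 random variables:
   [P a b] = Pr[V = pm a, W = pm b]. *)
Definition is_pair_dist {R : realType} (P : bool -> bool -> R) : Prop :=
  (forall a b, 0 <= P a b) /\ \sum_(a : bool) \sum_(b : bool) P a b = 1.

Definition prV {R : realType} (P : bool -> bool -> R) (x : bool) : R :=
  \sum_(b : bool) P x b.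
Definition prW {R : realType} (P : bool -> bool -> R) (y : bool) : R :=
  \sum_(a : bool) P a y.

Definition corr {R : realType} (P : bool -> bool -> R) : R :=
  \sum_(a : bool) \sum_(b : bool) pm a * pm b * P a b.

(* Cyclic successor on the index set 'I_5 = {0,..,4} (standing for {1,..,5}):
   ordS i has value (i+1) mod 5. *)
Definition succ5 (i : 'I_5) : 'I_5 := ordS i.

(* A KCBS-system: for each i, the joint distribution P i of the pair
   (V_i, W_{i (+)_5 1}); distinct pairs are stochastically unrelated, so the
   system is exactly this family of five joint distributions. *)
Definition KCBS_system {R : realType} (P : 'I_5 -> bool -> bool -> R) : Prop :=
  forall i, is_pair_dist (P i).

(* Consistent connectedness: V_i (in pair i) and W_i (in the pair whose
   second component is W_i, i.e. pair j with succ5 j = i) have the same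
   distribution. *)
Definition consistently_connected {R : realType}
  (P : 'I_5 -> bool -> bool -> R) : Prop :=
  forall j : 'I_5, forall x : bool, prV (P (succ5 j)) x = prW (P j) x.

Definition KCBS_exclusion {R : realType} (P : 'I_5 -> bool -> bool -> R) : Prop :=
  forall i, P i true true = 0.

(* Sum of the a_i with signs given by s ([s i = true] means minus sign). *)
Definition signed_sum {R : ringType} (n : nat) (s : {ffun 'I_n -> bool})
  (a : 'I_n -> R) : R :=
  \sum_(i < n) (if s i then - a i else a i).

(* The sign vector with a single minus sign at index 0 (odd number of minus
   signs); used only as the seed of the max below, and it belongs to the
   range of the max, so it does not affect the value. *)
Definition sign0 (n : nat) : {ffun 'I_n.+1 -> bool} := [ffun i => i == ord0].

Definition s_odd {R : realDomainType} (n : nat) (a : 'I_n.+1 -> R) : R :=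
  \big[Num.max/signed_sum (sign0 n) a]_(s : {ffun 'I_n.+1 -> bool}
                                   | odd #|[set i | s i]|) signed_sum s a.

(* Main.v *)
Require Import Defs.
From mathcomp Require Import all_boot all_order all_algebra.
From mathcomp Require Import reals lra.
Import Order.TTheory GRing.Theory Num.Theory.
Local Open Scope ring_scope.
Lemma key (R : realType) (y : nat -> R) (s : {ffun 'I_5 -> bool}) :
  0 <= y 0%N -> 0 <= y 1%N -> 0 <= y 2%N -> 0 <= y 3%N -> 0 <= y 4%N ->
  y 0%N + y 1%N <= 1 -> y 1%N + y 2%N <= 1 -> y 2%N + y 3%N <= 1 ->
  y 3%N + y 4%N <= 1 -> y 4%N + y 0%N <= 1 ->
  y 0%N + y 1%N + y 2%N + y 3%N + y 4%N <= 2 ->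
  odd #|[set i | s i]| ->
  signed_sum s (fun i : 'I_5 => 1 - 2 * (y i + y (i.+1 %% 5)%N)) <= 3.
Proof.
move=> h0 h1 h2 h3 h4 e0 e1 e2 e3 e4 hs.
move=> ho; move: ho; rewrite -sum1_card big_mkcond /= /signed_sum.
rewrite !big_ord_recl !big_ord0 /= /bump /= !in_set !addn0 !add1n modnn !modn_small //.
move: (s ord0) (s (lift ord0 ord0)) (s (lift ord0 (lift ord0 ord0)))
  (s (lift ord0 (lift ord0 (lift ord0 ord0))))
  (s (lift ord0 (lift ord0 (lift ord0 (lift ord0 ord0))))) => [] [] [] [] [] //= _; lra.
Qed.

Theorem theorem34 (R : realType) (P : 'I_5 -> bool -> bool -> R) :
  KCBS_system P ->
  consistently_connected P ->
  KCBS_exclusion P ->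
  (s_odd (fun i : 'I_5 => corr (P i)) <= 3
   <-> \sum_(i < 5) prV (P i) true <= 2).
Proof.
move=> hsys hcc hex.
pose y (k : nat) := P (inord k) true false.
have yv : forall i : 'I_5, y i = P i true false by move=> i; rewrite /y inord_val.
have hV : forall i, prV (P i) true = y i.
  by move=> i; rewrite /prV big_bool /= hex add0r yv.
have hW : forall i : 'I_5, P i false true = y (i.+1 %% 5)%N.
  move=> i; have := hcc i true; rewrite hV /prW big_bool /= hex add0r => <-.
  by rewrite /succ5 /ordS /=.
have hF : forall i : 'I_5, P i false false = 1 - y i - y (i.+1 %% 5)%N.
  move=> i; have [_] := hsys i; rewrite !big_bool /= hex -yv -hW => <-; lra.
have hC : forall i : 'I_5, corr (P i) = 1 - 2 * (y i + y (i.+1 %% 5)%N).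
  move=> i; rewrite /corr !big_bool /= /pm hex hF hW -yv; lra.
have hN : forall i : 'I_5, 0 <= y i by move=> i; rewrite yv; case: (hsys i) => h _; exact: h.
have hE : forall i : 'I_5, y i + y (i.+1 %% 5)%N <= 1.
  move=> i; have [h1 h2] := hsys i; move: h2; rewrite !big_bool /= hex -yv -hW.
  have := h1 false false; lra.
have n0 := hN (inord 0); have n1 := hN (inord 1); have n2 := hN (inord 2);
have n3 := hN (inord 3); have n4 := hN (inord 4).
have f0 := hE (inord 0); have f1 := hE (inord 1); have f2 := hE (inord 2);
have f3 := hE (inord 3); have f4 := hE (inord 4).
rewrite !inordK // in n0 n1 n2 n3 n4 f0 f1 f2 f3 f4.
have hsum : \sum_(i < 5) prV (P i) true = y 0%N + y 1%N + y 2%N + y 3%N + y 4%N.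
  rewrite (eq_bigr (fun i : 'I_5 => y i)); last by move=> i _; rewrite hV.
  rewrite !big_ord_recl big_ord0 /= /bump /=; lra.
rewrite hsum /s_odd (eq_bigr (fun s => signed_sum s (fun i : 'I_5 => 1 - 2 * (y i + y (i.+1 %% 5)%N)))); last first.
  by move=> s _; rewrite /signed_sum; apply: eq_bigr => i _; rewrite hC.
have -> : signed_sum (sign0 4) (fun i : 'I_5 => corr (P i)) =
          signed_sum (sign0 4) (fun i : 'I_5 => 1 - 2 * (y i + y (i.+1 %% 5)%N)).
  by rewrite /signed_sum; apply: eq_bigr => i _; rewrite hC.
split.
- move=> hle.
  have := le_trans (le_bigmax_cond _ (P := fun s : {ffun 'I_5 -> bool} => odd #|[set i | s i]|)
     (fun s => signed_sum s (fun i : 'I_5 => 1 - 2 * (y i + y (i.+1 %% 5)%N))) _) hle.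
  pose s1 : {ffun 'I_5 -> bool} := [ffun => true].
  move=> /(_ s1).
  have -> : odd #|[set i | s1 i]|.
    by rewrite -sum1_card big_mkcond /= !big_ord_recl big_ord0 /= !in_set !ffunE.
  move=> /(_ isT).
  rewrite /signed_sum !big_ord_recl big_ord0 /s1 !ffunE /= /bump /= !addn0 !add1n modnn !modn_small //.
  lra.
- move=> hs.
  apply: bigmax_le => [|s hs']; first apply: key => //.
    by rewrite -sum1_card big_mkcond /= !big_ord_recl big_ord0 /= !in_set /sign0 !ffunE.
  exact: key.
Qed.
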